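(* Let $(V,\rho)$ be a finite rank torsion free $\mathfrak{sl}(2)$-module. Then its Casimir operator $C_\rho$, regarded as a $\mathbb{C}$-linear endomorphism of $V$, has a minimal polynomial, and it coincides with the minimal polynomial of the Casimir operator $C_{\rho_{\mathrm{rat}}}$ of its rationalization $F_{\mathrm{rat}}(V,\rho)=(S^{-1}V,\rho_{\mathrm{rat}})$.
   Context: $\mathfrak{sl}(2)$ has basis $L_{-1}=f$, $L_0=-\tfrac12 h$, $L_1=-e$ for a Chevalley basis $e,f,h$ ($[e,f]=h$, $[h,e]=2e$, $[h,f]=-2f$). An $\mathfrak{sl}(2)$-module $(V,\rho)$ is a $\mathbb{C}[z]$-module via $z\cdot v=\rho(L_0)v$; it is torsion free if torsion free as a $\mathbb{C}[z]$-module and of finite rank if $S^{-1}V$ is finite-dimensional over $\mathbb{C}(z)$, $S=\mathbb{C}[z]\setminus\{0\}$. The Casimir operator is $C_\rho=\rho(L_0)(\rho(L_0)-1)-\rho(L_{-1})\rho(L_1)$. The rationalization is $(S^{-1}V,\rho_{\mathrm{rat}})$ with $\rho_{\mathrm{rat}}(L_{-1})(v/p(z))=\rho(L_{-1})(v)/p(z-1)$, $\rho_{\mathrm{rat}}(L_0)(v/p(z))=zv/p(z)$, $\rho_{\mathrm{rat}}(L_1)(v/p(z))=\rho(L_1)(v)/p(z+1)$. *)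

(* Defs.v *)
From HB Require Import structures.
From mathcomp Require Import all_boot all_order all_algebra.
From mathcomp Require Import complex.
From mathcomp Require Import reals.
Set Implicit Arguments. Unset Strict Implicit. Unset Printing Implicit Defensive.
Import Order.TTheory GRing.Theory Num.Theory.
Local Open Scope ring_scope.

Record sl2mod (R : realType) (V : lmodType R[i]) := Sl2mod {
  sl2_e : {linear V -> V};
  sl2_f : {linear V -> V};
  sl2_h : {linear V -> V};
  sl2_ef : forall v, sl2_e (sl2_f v) - sl2_f (sl2_e v) = sl2_h v;
  sl2_he : forall v, sl2_h (sl2_e v) - sl2_e (sl2_h v) = 2%:R *: sl2_e v;
  sl2_hf : forall v, sl2_h (sl2_f v) - sl2_f (sl2_h v) = - (2%:R *: sl2_f v)
}.

Section Sl2Defs.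
Variable R : realType.
Local Notation C := R[i].
Variable V : lmodType C.
Variable rho : sl2mod V.

Definition Lm1 (v : V) : V := sl2_f rho v.
Definition L0 (v : V) : V := - ((2%:R : C)^-1 *: sl2_h rho v).
Definition L1 (v : V) : V := - sl2_e rho v.

Definition peval (p : {poly C}) (T : V -> V) (v : V) : V :=
  \sum_(i < size p) p`_i *: iter i T v.

(* C[z]-module structure: z . v = rho(L_0) v *)
Definition zact (p : {poly C}) (v : V) : V := peval p L0 v.

Definition casimir (v : V) : V := L0 (L0 v) - L0 v - Lm1 (L1 v).

Definition torsion_free : Prop :=
  forall (p : {poly C}) (v : V), p != 0 -> zact p v = 0 -> v = 0.

(* ---- The localization S^{-1} V, S = C[z] \ {0}, as fractions v / p
   (pairs (v, p) with p != 0) modulo the usual equivalence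
   v/p = w/q  iff  s (q v - p w) = 0 for some s in S. ---- *)
Definition frac := (V * {poly C})%type.
Definition frac_ok (x : frac) : Prop := x.2 != 0.
Definition frac_eq (x y : frac) : Prop :=
  exists s : {poly C}, s != 0 /\ zact s (zact y.2 x.1 - zact x.2 y.1) = 0.

Definition frac0 : frac := (0, 1).
Definition frac_add (x y : frac) : frac :=
  (zact y.2 x.1 + zact x.2 y.1, x.2 * y.2).
Definition frac_opp (x : frac) : frac := (- x.1, x.2).
Definition frac_scale (c : C) (x : frac) : frac := (c *: x.1, x.2).
(* C(z)-scalar action by a/b (b != 0) *)
Definition frac_rscale (a b : {poly C}) (x : frac) : frac :=
  (zact a x.1, b * x.2).

Definition ratLm1 (x : frac) : frac := (Lm1 x.1, x.2 \Po ('X - 1)).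
Definition ratL0 (x : frac) : frac := (L0 x.1, x.2).
Definition ratL1 (x : frac) : frac := (L1 x.1, x.2 \Po ('X + 1)).

Definition rat_casimir (x : frac) : frac :=
  frac_add (frac_add (ratL0 (ratL0 x)) (frac_opp (ratL0 x)))
           (frac_opp (ratLm1 (ratL1 x))).

Definition frac_peval (p : {poly C}) (T : frac -> frac) (x : frac) : frac :=
  \big[frac_add/frac0]_(i < size p) frac_scale p`_i (iter i T x).

(* finite rank: S^{-1} V is finite dimensional over C(z), i.e. spanned over
   C(z) by finitely many fractions *)
Definition finite_rank : Prop :=
  exists (n : nat) (xs : 'I_n -> frac), (forall i, frac_ok (xs i)) /\
    forall x : frac, frac_ok x ->
      exists (a b : 'I_n -> {poly C}), (forall i, b i != 0) /\
        frac_eq x (\big[frac_add/frac0]_(i < n) frac_rscale (a i) (b i) (xs i)).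

Definition annihilates_casimir (p : {poly C}) : Prop :=
  forall v : V, peval p casimir v = 0.
Definition annihilates_rat_casimir (p : {poly C}) : Prop :=
  forall x : frac, frac_ok x -> frac_eq (frac_peval p rat_casimir x) frac0.

End Sl2Defs.

Definition is_minpoly (R : realType) (ann : {poly R[i]} -> Prop) (p : {poly R[i]}) : Prop :=
  p \is monic /\ ann p /\ forall q, ann q -> (p %| q)%R.

(* Main.v *)
Require Import Defs.
From HB Require Import structures.
From mathcomp Require Import all_boot all_order all_algebra.
From mathcomp Require Import complex.
From mathcomp Require Import reals.
From Stdlib Require Classical_Prop.
From mathcomp Require Import ring zify.
Set Implicit Arguments. Unset Strict Implicit. Unset Printing Implicit Defensive.
Import Order.TTheory GRing.Theory Num.Theory.
Local Open Scope ring_scope.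

Lemma sum_pad (W : zmodType) (F : nat -> W) n m : (n <= m)%N ->
  (forall i, (n <= i)%N -> F i = 0) -> \sum_(i < m) F i = \sum_(i < n) F i.
Proof.
move=> nm FF; rewrite -(subnKC nm) big_split_ord /=.
rewrite [X in _ + X]big1 ?addr0 // => i _.
by apply: FF; rewrite leq_addr.
Qed.

Section GenEval.
Variables (A : comNzRingType) (W : zmodType) (act : A -> W -> W) (T : W -> W).
Hypothesis act_addl : forall a b w, act (a + b) w = act a w + act b w.
Hypothesis act_addr : forall a u w, act a (u + w) = act a u + act a w.
Hypothesis act_mul : forall a b w, act (a * b) w = act a (act b w).
Hypothesis act_1 : forall w, act 1 w = w.
Hypothesis T_add : forall u w, T (u + w) = T u + T w.
Hypothesis T_act : forall a w, T (act a w) = act a (T w).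

Definition gev (p : {poly A}) (w : W) := \sum_(i < size p) act p`_i (iter i T w).

Lemma act0l w : act 0 w = 0.
Proof. by apply: (@addrI _ (act 0 w)); rewrite -act_addl !addr0. Qed.
Lemma act0r a : act a 0 = 0.
Proof. by apply: (@addrI _ (act a 0)); rewrite -act_addr !addr0. Qed.
Lemma T0 : T 0 = 0.
Proof. by apply: (@addrI _ (T 0)); rewrite -T_add !addr0. Qed.
Lemma actNr a w : act a (- w) = - act a w.
Proof. by apply: (@addrI _ (act a w)); rewrite -act_addr !subrr act0r. Qed.
Lemma actNl a w : act (- a) w = - act a w.
Proof. by apply: (@addrI _ (act a w)); rewrite -act_addl !subrr act0l. Qed.
Lemma TN w : T (- w) = - T w.
Proof. by apply: (@addrI _ (T w)); rewrite -T_add !subrr T0. Qed.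
Lemma act_sumr a n (F : 'I_n -> W) : act a (\sum_(i < n) F i) = \sum_(i < n) act a (F i).
Proof. by elim/big_rec2: _ => [|i x y _ <-]; rewrite ?act0r ?act_addr. Qed.
Lemma act_suml n (F : 'I_n -> A) w : act (\sum_(i < n) F i) w = \sum_(i < n) act (F i) w.
Proof. by elim/big_rec2: _ => [|i x y _ <-]; rewrite ?act0l ?act_addl. Qed.
Lemma iterT_add k u w : iter k T (u + w) = iter k T u + iter k T w.
Proof. by elim: k => //= k ->; rewrite T_add. Qed.
Lemma iterT_act k a w : iter k T (act a w) = act a (iter k T w).
Proof. by elim: k => //= k ->; rewrite T_act. Qed.
Lemma iterT0 k : iter k T 0 = 0.
Proof. by elim: k => //= k ->; rewrite T0. Qed.

Lemma gev_pad (p : {poly A}) (w : W) m : (size p <= m)%N ->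
  gev p w = \sum_(i < m) act p`_i (iter i T w).
Proof.
move=> sm; rewrite /gev (sum_pad (F := fun i => act p`_i (iter i T w)) sm) //.
by move=> i si; rewrite nth_default // act0l.
Qed.

Lemma gev0 w : gev 0 w = 0.
Proof. by rewrite /gev size_poly0 big_ord0. Qed.

Lemma gev_add p q w : gev (p + q) w = gev p w + gev q w.
Proof.
pose m := maxn (size p) (size q).
rewrite (@gev_pad (p + q) w m) ?(leq_trans (size_polyD _ _)) //.
rewrite (@gev_pad p w m) ?leq_maxl // (@gev_pad q w m) ?leq_maxr //.
by rewrite -big_split /=; apply: eq_bigr => i _; rewrite coefD act_addl.
Qed.

Lemma gev_addr p u w : gev p (u + w) = gev p u + gev p w.
Proof.
by rewrite /gev -big_split /=; apply: eq_bigr => i _; rewrite iterT_add act_addr.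
Qed.

Lemma gev_0r p : gev p 0 = 0.
Proof. by rewrite /gev big1 // => i _; rewrite iterT0 act0r. Qed.

Lemma gev_actr p a w : gev p (act a w) = act a (gev p w).
Proof.
rewrite /gev act_sumr; apply: eq_bigr => i _.
by rewrite iterT_act -!act_mul mulrC.
Qed.

Lemma gev_C a w : gev a%:P w = act a w.
Proof.
rewrite (@gev_pad _ _ 1) ?size_polyC ?leq_b1 // big_ord1 coefC /=.
by [].
Qed.

Lemma gev_mulX p w : gev (p * 'X) w = gev p (T w).
Proof.
rewrite (@gev_pad _ _ (size p).+1); last first.
  by rewrite (leq_trans (size_polyMleq _ _)) // size_polyX addn2.
rewrite big_ord_recl coefMX /= act0l add0r /gev.
apply: eq_bigr => i _; rewrite coefMX /=; congr (act _ _).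
by rewrite -iterSr.
Qed.

Lemma gev_mulC p c w : gev (p * c%:P) w = gev p (act c w).
Proof.
rewrite mulrC mul_polyC (@gev_pad _ _ (size p)) ?size_scale_leq //.
apply: eq_bigr => i _; rewrite coefZ mulrC act_mul; congr (act _ _).
by rewrite iterT_act.
Qed.

Lemma gev_mul p q w : gev (p * q) w = gev p (gev q w).
Proof.
elim/poly_ind: q w => [|q c IH] w; first by rewrite mulr0 gev0 gev_0r.
rewrite mulrDr mulrA gev_add gev_mulX IH gev_add gev_mulX gev_addr gev_C.
by rewrite gev_mulC.
Qed.

Lemma gev_comm (S : W -> W) p w :
  (forall u v, S (u + v) = S u + S v) -> (forall a u, S (act a u) = act a (S u)) ->
  (forall u, S (T u) = T (S u)) -> gev p (S w) = S (gev p w).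
Proof.
move=> Sadd Sact ST.
have S0 : S 0 = 0 by apply: (@addrI _ (S 0)); rewrite -Sadd !addr0.
have Ssum : forall n (F : 'I_n -> W), S (\sum_(i < n) F i) = \sum_(i < n) S (F i).
  by move=> n F; elim/big_rec2: _ => [|i x y _ <-]; rewrite ?S0 ?Sadd.
rewrite /gev Ssum; apply: eq_bigr => i _; rewrite Sact; congr (act _ _).
by elim: (nat_of_ord i) => //= k ->; rewrite ST.
Qed.
End GenEval.

Lemma ex_minP (P : nat -> Prop) : (exists n, P n) -> exists n, P n /\ forall m, P m -> (n <= m)%N.
Proof.
move=> [n Pn]; elim/ltn_ind: n Pn => n IH Pn.
case: (Classical_Prop.classic (exists m, (m < n)%N /\ P m)) => [[m [mn Pm]]|H].
  exact: IH mn Pm.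
exists n; split => // m Pm; rewrite leqNgt; apply/negP => mn; apply: H; by exists m.
Qed.

Section PolyShift.
Variable F : numFieldType.
Implicit Types p q : {poly F}.

Lemma size_Xm1 : size ('X - 1 : {poly F}) = 2.
Proof. by rewrite -polyC1 size_XsubC. Qed.

Lemma size_shift p : size (p \Po ('X - 1)) = size p.
Proof. by rewrite size_comp_poly2 // size_Xm1. Qed.

Lemma lead_shift p : lead_coef (p \Po ('X - 1)) = lead_coef p.
Proof. by rewrite lead_coef_comp ?size_Xm1 // -polyC1 lead_coefXsubC expr1n mulr1. Qed.

Lemma size_diff_shift p : p != 0 -> (size (p - (p \Po ('X - 1)))%R < size p)%N.
Proof.
move=> p0; rewrite (polySpred p0) ltnS; apply/leq_sizeP => j lej.
rewrite coefB; case: (ltngtP j (size p).-1) => [|jn|->].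
- by rewrite ltnNge lej.
- by rewrite !nth_default ?subrr // ?size_shift (polySpred p0).
- by rewrite -[in X in X - _]lead_coefE -(size_shift p) -lead_coefE lead_shift subrr.
Qed.

Lemma shift_fixed_val q : q \Po ('X - 1) = q -> forall k : nat, q.[k%:R] = q.[0].
Proof.
move=> qf; elim=> [|k IH]; first by rewrite mulr0n.
by rewrite -qf horner_comp !hornerE mulrSr addrK qf.
Qed.

Lemma shift_fixed p : p \Po ('X - 1) = p -> (size p <= 1)%N.
Proof.
move=> pf; pose q := p - (p.[0])%:P.
have qf : q \Po ('X - 1) = q by rewrite /q comp_polyB comp_polyC pf.
have qr : forall k : nat, q.[k%:R] = 0.
  move=> k; rewrite shift_fixed_val // /q !hornerE subrr //.
have q0 : q = 0.
  apply/eqP; apply/negPn/negP => qn0.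
  pose rs := [seq (i%:R : F) | i <- iota 0 (size q)].
  have hall : all (root q) rs.
    by apply/allP => x /mapP [i _ ->]; apply/rootP; exact: qr.
  have hu : uniq rs.
    rewrite map_inj_uniq ?iota_uniq // => i j /eqP; rewrite eqr_nat; exact: eqP.
  have := max_poly_roots qn0 hall hu.
  by rewrite size_map size_iota ltnn.
have -> : p = (p.[0])%:P by apply/eqP; rewrite -subr_eq0 -/q q0.
by rewrite size_polyC leq_b1.
Qed.
End PolyShift.

Section Sl2.
Variables (R : realType) (V : lmodType R[i]) (rho : sl2mod V).
Local Notation C := R[i].
Local Notation e := (sl2_e rho).
Local Notation f := (sl2_f rho).
Local Notation h := (sl2_h rho).
Local Notation L0 := (L0 rho).
Local Notation L1 := (L1 rho).
Local Notation Lm1 := (Lm1 rho).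
Local Notation cas := (casimir rho).
Local Notation zact := (zact rho).

Lemma two_neq0 : (2%:R : C) != 0.
Proof. by rewrite pnatr_eq0. Qed.
Lemma half2 : (2%:R : C)^-1 * 2%:R = 1.
Proof. by rewrite mulVf // two_neq0. Qed.

Lemma L0D u w : L0 (u + w) = L0 u + L0 w.
Proof. by rewrite /Defs.L0 [h _]linearD scalerDr opprD. Qed.
Lemma L0Z (a : C) w : L0 (a *: w) = a *: L0 w.
Proof. by rewrite /Defs.L0 [h _]linearZ scalerA mulrC -scalerA scalerN. Qed.
Lemma L0N w : L0 (- w) = - L0 w.
Proof. by rewrite /Defs.L0 [h _]linearN scalerN. Qed.
Lemma L0B u w : L0 (u - w) = L0 u - L0 w.
Proof. by rewrite L0D L0N. Qed.
Lemma L1D u w : L1 (u + w) = L1 u + L1 w.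
Proof. by rewrite /Defs.L1 linearD opprD. Qed.
Lemma L1Z (a : C) w : L1 (a *: w) = a *: L1 w.
Proof. by rewrite /Defs.L1 linearZ scalerN. Qed.
Lemma L1N w : L1 (- w) = - L1 w.
Proof. by rewrite /Defs.L1 linearN. Qed.
Lemma Lm1D u w : Lm1 (u + w) = Lm1 u + Lm1 w.
Proof. by rewrite /Defs.Lm1 linearD. Qed.
Lemma Lm1Z (a : C) w : Lm1 (a *: w) = a *: Lm1 w.
Proof. by rewrite /Defs.Lm1 linearZ. Qed.
Lemma Lm1N w : Lm1 (- w) = - Lm1 w.
Proof. by rewrite /Defs.Lm1 linearN. Qed.
Lemma Lm1B u w : Lm1 (u - w) = Lm1 u - Lm1 w.
Proof. by rewrite Lm1D Lm1N. Qed.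

Lemma hfE v : h (f v) = f (h v) - 2%:R *: f v.
Proof. by apply/eqP; rewrite -subr_eq0 opprD opprK addrA (sl2_hf rho) addNr. Qed.
Lemma heE v : h (e v) = e (h v) + 2%:R *: e v.
Proof. by apply/eqP; rewrite -subr_eq0 opprD addrA (sl2_he rho) subrr. Qed.
Lemma efE v : e (f v) = f (e v) + h v.
Proof. by apply/eqP; rewrite -subr_eq0 opprD addrA (sl2_ef rho) subrr. Qed.

Lemma R1 v : Lm1 (L0 v) = L0 (Lm1 v) - Lm1 v.
Proof.
rewrite /Defs.Lm1 /Defs.L0 [f _]linearN [f (_ *: _)]linearZ hfE scalerBr scalerA half2 scale1r.
by rewrite opprB addrC addrA addNr add0r.
Qed.

Lemma R2 v : L1 (L0 v) = L0 (L1 v) + L1 v.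
Proof.
rewrite /Defs.L1 /Defs.L0 [e (- _)]linearN [e (_ *: _)]linearZ [h (- _)]linearN heE !scalerN !opprK scalerDr scalerA half2 scale1r addrK.
by [].
Qed.

Lemma R3 v : L1 (Lm1 v) = Lm1 (L1 v) + 2%:R *: L0 v.
Proof.
rewrite /Defs.L1 /Defs.L0 /Defs.Lm1 [f (- _)]linearN efE scalerN scalerA mulrC half2 scale1r.
by rewrite opprD.
Qed.

Lemma casE2 v : cas v = L0 (L0 v) + L0 v - L1 (Lm1 v).
Proof.
rewrite /casimir R3 scaler_nat mulr2n !opprD !addrA (addrAC (L0 (L0 v) + L0 v)) addrK addrAC.
by [].
Qed.
Lemma L1B u w : L1 (u - w) = L1 u - L1 w.
Proof. by rewrite L1D L1N. Qed.

Lemma casD u w : cas (u + w) = cas u + cas w.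
Proof. by rewrite /casimir !L0D L1D Lm1D !opprD (addrACA (L0 (L0 u))) (addrACA (L0 (L0 u) - L0 u)). Qed.
Lemma casZ (a : C) w : cas (a *: w) = a *: cas w.
Proof. by rewrite /casimir !L0Z L1Z Lm1Z -!scalerBr. Qed.
Lemma cas_L0 v : cas (L0 v) = L0 (cas v).
Proof. by rewrite /casimir R2 Lm1D R1 subrK !L0B. Qed.
Lemma cas_Lm1 v : cas (Lm1 v) = Lm1 (cas v).
Proof. by rewrite [in RHS]casE2 Lm1B Lm1D R1 subrK R1 L0B. Qed.
Lemma cas_L1 v : cas (L1 v) = L1 (cas v).
Proof. by rewrite casE2 /casimir !L1B R2 addrK R2 L0D. Qed.

Definition sc := fun (c : C) (w : V) => c *: w.
Lemma zact_gev p v : zact p v = gev sc L0 p v.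
Proof. by []. Qed.

Ltac solve_sc := rewrite /sc; move=> *;
  first [exact: scalerDl | exact: scalerDr | exact: (esym (scalerA _ _ _)) | exact: scale1r | exact: L0D | exact: L0Z].

Lemma zactD p q v : zact (p + q) v = zact p v + zact q v.
Proof. rewrite !zact_gev; apply: gev_add; solve_sc. Qed.
Lemma zactDr p u w : zact p (u + w) = zact p u + zact p w.
Proof. rewrite !zact_gev; apply: gev_addr; solve_sc. Qed.
Lemma zact0 v : zact 0 v = 0.
Proof. by rewrite zact_gev gev0. Qed.
Lemma zact0r p : zact p 0 = 0.
Proof. rewrite zact_gev; apply: gev_0r; solve_sc. Qed.
Lemma zactN p v : zact (- p) v = - zact p v.
Proof. by apply: (@addrI _ (zact p v)); rewrite -zactD !subrr zact0. Qed.
Lemma zactB p q v : zact (p - q) v = zact p v - zact q v.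
Proof. by rewrite zactD zactN. Qed.
Lemma zactNr p v : zact p (- v) = - zact p v.
Proof. by apply: (@addrI _ (zact p v)); rewrite -zactDr !subrr zact0r. Qed.
Lemma zactBr p u w : zact p (u - w) = zact p u - zact p w.
Proof. by rewrite zactDr zactNr. Qed.
Lemma zactC c v : zact c%:P v = c *: v.
Proof. rewrite zact_gev; apply: gev_C; solve_sc. Qed.
Lemma zact1 v : zact 1 v = v.
Proof. by rewrite -polyC1 zactC scale1r. Qed.
Lemma zactMX p v : zact (p * 'X) v = zact p (L0 v).
Proof. rewrite !zact_gev; apply: gev_mulX; solve_sc. Qed.
Lemma zactX v : zact 'X v = L0 v.
Proof. by rewrite -['X]mul1r zactMX zact1. Qed.
Lemma zactM p q v : zact (p * q) v = zact p (zact q v).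
Proof. rewrite !zact_gev; apply: gev_mul; solve_sc. Qed.
Lemma zactZr p (a : C) v : zact p (a *: v) = a *: zact p v.
Proof. rewrite !zact_gev; apply: (@gev_actr _ _ sc); solve_sc. Qed.
Lemma zact_sumr p n (F : 'I_n -> V) : zact p (\sum_(i < n) F i) = \sum_(i < n) zact p (F i).
Proof. by elim/big_rec2: _ => [|i x y _ <-]; rewrite ?zact0r ?zactDr. Qed.
Lemma zact_suml n (F : 'I_n -> {poly C}) v : zact (\sum_(i < n) F i) v = \sum_(i < n) zact (F i) v.
Proof. by elim/big_rec2: _ => [|i x y _ <-]; rewrite ?zact0 ?zactD. Qed.

Lemma cas_zact p v : cas (zact p v) = zact p (cas v).
Proof.
rewrite !zact_gev; symmetry; apply: gev_comm; try solve_sc.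
- exact: casD.
- exact: casZ.
- exact: cas_L0.
Qed.

Lemma Lm1_zact p v : Lm1 (zact p v) = zact (p \Po ('X - 1)) (Lm1 v).
Proof.
elim/poly_ind: p v => [|p c IH] v; first by rewrite comp_poly0 !zact0 /Defs.Lm1 linear0.
rewrite zactD zactMX zactC Lm1D IH Lm1Z R1.
rewrite comp_polyD comp_polyM comp_polyX comp_polyC zactD zactM zactC.
by rewrite zactB zactX zact1.
Qed.

Lemma L1_zact p v : L1 (zact p v) = zact (p \Po ('X + 1)) (L1 v).
Proof.
elim/poly_ind: p v => [|p c IH] v; first by rewrite comp_poly0 !zact0 /Defs.L1 linear0 oppr0.
rewrite zactD zactMX zactC L1D IH L1Z R2.
rewrite comp_polyD comp_polyM comp_polyX comp_polyC zactD zactM zactC.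
by rewrite zactD zactX zact1.
Qed.

Definition ev (Q : {poly {poly C}}) (v : V) : V := gev zact cas Q v.

Ltac solve_z := move=> *;
  first [exact: zactD | exact: zactDr | exact: zactM | exact: zact1 | exact: casD | exact: cas_zact].

Lemma evD P Q v : ev (P + Q) v = ev P v + ev Q v.
Proof. apply: gev_add; solve_z. Qed.
Lemma evDr P u w : ev P (u + w) = ev P u + ev P w.
Proof. apply: gev_addr; solve_z. Qed.
Lemma ev0 v : ev 0 v = 0.
Proof. exact: gev0. Qed.
Lemma ev0r P : ev P 0 = 0.
Proof. apply: gev_0r; solve_z. Qed.
Lemma evN P v : ev (- P) v = - ev P v.
Proof. by apply: (@addrI _ (ev P v)); rewrite -evD !subrr ev0. Qed.
Lemma evB P Q v : ev (P - Q) v = ev P v - ev Q v.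
Proof. by rewrite evD evN. Qed.
Lemma evNr P v : ev P (- v) = - ev P v.
Proof. by apply: (@addrI _ (ev P v)); rewrite -evDr !subrr ev0r. Qed.
Lemma evC a v : ev a%:P v = zact a v.
Proof. apply: gev_C; solve_z. Qed.
Lemma evM P Q v : ev (P * Q) v = ev P (ev Q v).
Proof. apply: gev_mul; solve_z. Qed.
Lemma evX v : ev 'X v = cas v.
Proof. by rewrite -['X]mul1r /ev gev_mulX -/(ev 1 _) ?evC ?zact1 //; solve_z. Qed.
Lemma ev_zact P a v : ev P (zact a v) = zact a (ev P v).
Proof. apply: gev_actr; solve_z. Qed.
Lemma ev_sumr P n (F : 'I_n -> V) : ev P (\sum_(i < n) F i) = \sum_(i < n) ev P (F i).
Proof. by elim/big_rec2: _ => [|i x y _ <-]; rewrite ?ev0r ?evDr. Qed.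

Definition Iann (Q : {poly {poly C}}) := forall v, ev Q v = 0.

Lemma Iann_mull S Q : Iann Q -> Iann (S * Q).
Proof. by move=> IQ v; rewrite evM IQ ev0r. Qed.
Lemma Iann_B P Q : Iann P -> Iann Q -> Iann (P - Q).
Proof. by move=> IP IQ v; rewrite evB IP IQ subrr. Qed.
Lemma Iann_sat (tf : torsion_free rho) a Q : a != 0 -> Iann (a%:P * Q) -> Iann Q.
Proof. by move=> a0 IQ v; apply: (tf a) => //; rewrite -evC -evM IQ. Qed.

Definition sig := map_poly (comp_poly ('X - 1 : {poly C})).
Definition tau := map_poly (comp_poly ('X + 1 : {poly C})).

Lemma comp_sig_tau (p : {poly C}) : (p \Po ('X - 1)) \Po ('X + 1) = p.
Proof. by rewrite -comp_polyA comp_polyB comp_polyX comp_polyC addrK comp_polyXr. Qed.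
Lemma comp_tau_sig (p : {poly C}) : (p \Po ('X + 1)) \Po ('X - 1) = p.
Proof. by rewrite -comp_polyA comp_polyD comp_polyX comp_polyC subrK comp_polyXr. Qed.

Lemma sig_tau Q : sig (tau Q) = Q.
Proof.
apply/polyP => i; rewrite /sig /tau !coef_map /=; exact: comp_tau_sig.
Qed.
Lemma tau_sig Q : tau (sig Q) = Q.
Proof.
apply/polyP => i; rewrite /sig /tau !coef_map /=; exact: comp_sig_tau.
Qed.

Lemma size_sig Q : size (sig Q) = size Q.
Proof.
apply: size_map_inj_poly; last by rewrite comp_poly0.
by move=> p q /(congr1 (comp_poly ('X + 1))); rewrite /= !comp_sig_tau.
Qed.
Lemma size_tau Q : size (tau Q) = size Q.
Proof.
apply: size_map_inj_poly; last by rewrite comp_poly0.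
by move=> p q /(congr1 (comp_poly ('X - 1))); rewrite /= !comp_tau_sig.
Qed.

Lemma iter_cas_Lm1 k w : iter k cas (Lm1 w) = Lm1 (iter k cas w).
Proof. by elim: k => //= k ->; rewrite cas_Lm1. Qed.
Lemma iter_cas_L1 k w : iter k cas (L1 w) = L1 (iter k cas w).
Proof. by elim: k => //= k ->; rewrite cas_L1. Qed.

Lemma ev_sig Q w : ev (sig Q) (Lm1 w) = Lm1 (ev Q w).
Proof.
rewrite /ev /gev size_sig /Defs.Lm1 raddf_sum; apply: eq_bigr => i _.
by rewrite /sig coef_map /= iter_cas_Lm1 -Lm1_zact.
Qed.
Lemma ev_tau Q w : ev (tau Q) (L1 w) = L1 (ev Q w).
Proof.
rewrite /ev /gev size_tau /Defs.L1.
have -> : forall n (F : 'I_n -> V), - e (\sum_(i < n) F i) = \sum_(i < n) - e (F i).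
  by move=> n F; rewrite raddf_sum -sumrN.
apply: eq_bigr => i _.
by rewrite /tau coef_map /= iter_cas_L1 -L1_zact.
Qed.

Definition aa : {poly C} := 'X * ('X - 1).
Definition bb : {poly C} := 'X * ('X + 1).

Lemma I_sig Q : Iann Q -> Iann (sig Q * ('X - aa%:P)).
Proof.
move=> IQ v; rewrite evM evB evX evC /aa zactM zactX zactB zactX zact1.
have -> : cas v - L0 (L0 v - v) = - Lm1 (L1 v).
  by rewrite L0B /casimir (addrAC (_ - _)) subrr add0r.
by rewrite evNr ev_sig IQ /Defs.Lm1 linear0 oppr0.
Qed.

Lemma I_tau Q : Iann Q -> Iann (tau Q * ('X - bb%:P)).
Proof.
move=> IQ v; rewrite evM evB evX evC /bb zactM zactX zactD zactX zact1.
have -> : cas v - L0 (L0 v + v) = - L1 (Lm1 v).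
  by rewrite L0D casE2 (addrAC (_ + _)) subrr add0r.
by rewrite evNr ev_tau IQ /Defs.L1 linear0 oppr0 oppr0.
Qed.

Lemma bb_shift : bb \Po ('X - 1) = aa.
Proof.
by rewrite /aa /bb comp_polyM comp_polyD comp_polyX comp_polyC subrK mulrC.
Qed.

Lemma sigM P Q : sig (P * Q) = sig P * sig Q.
Proof. by rewrite /sig rmorphM. Qed.
Lemma sigC a : sig a%:P = (a \Po ('X - 1))%:P.
Proof. by rewrite /sig map_polyC. Qed.
Lemma sigXsubC a : sig ('X - a%:P) = 'X - (a \Po ('X - 1))%:P.
Proof. by rewrite /sig rmorphB /= map_polyX map_polyC. Qed.

Section Main.
Hypothesis tf : torsion_free rho.

Lemma ann_from_I : (exists Q, Q != 0 /\ Iann Q) ->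
  exists P : {poly C}, P != 0 /\ forall v, peval P cas v = 0.
Proof.
move=> HQ.
have [d [[Q1 [Q10 [IQ1 sQ1]]] mind]] :=
  ex_minP (P := fun d => exists Q, Q != 0 /\ Iann Q /\ size Q = d)
    (let: ex_intro Q (conj Q0 IQ) := HQ in ex_intro _ (size Q) (ex_intro _ Q (conj Q0 (conj IQ erefl)))).
have [k [[Q [Q0 [IQ [sQ lQ]]]] mink]] :=
  ex_minP (P := fun k => exists Q, Q != 0 /\ Iann Q /\ size Q = d /\ size (lead_coef Q) = k)
    (ex_intro _ _ (ex_intro _ Q1 (conj Q10 (conj IQ1 (conj sQ1 erefl))))).
clear Q1 Q10 IQ1 sQ1.
have Isz : forall P, Iann P -> (size P < d)%N -> P = 0.
  move=> P IP sP; apply/eqP; apply/negPn/negP => P0.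
  have := mind (size P) (ex_intro _ P (conj P0 (conj IP erefl))).
  by rewrite leqNgt sP.
have E1 : forall P, Iann P -> exists c S, c != 0 /\ c%:P * P = S * Q.
  move=> P IP; exists (lead_coef Q ^+ scalp P Q), (P %/ Q); split.
    by rewrite expf_neq0 // lead_coef_eq0.
  have := Pdiv.Idomain.divp_eq P Q; set c := _ ^+ _ => eq.
  have Ir : Iann (P %% Q).
    have -> : P %% Q = c%:P * P - P %/ Q * Q by rewrite mul_polyC eq addrAC subrr add0r.
    by apply: Iann_B; apply: Iann_mull.
  have r0 := Isz _ Ir; rewrite -sQ ltn_modp Q0 in r0.
  by rewrite mul_polyC eq r0 // addr0.
have Q0' : Q != 0 := Q0.
pose D : {poly {poly C}} := 'X - aa%:P.
have D0 : D != 0 by rewrite -size_poly_eq0 size_XsubC.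
have sigQ0 : sig Q != 0 by rewrite -size_poly_eq0 size_sig size_poly_eq0.
have E2 : Iann (sig Q).
  have [c1 [S1 [c10 eq1]]] := E1 _ (I_sig IQ).
  have [c2 [S2 [c20 eq2]]] := E1 _ (I_tau IQ).
  have eq2' : (c2 \Po ('X - 1))%:P * (Q * D) = sig S2 * sig Q.
    have := congr1 sig eq2; rewrite !sigM sigC sigXsubC sig_tau bb_shift; exact.
  have c2'0 : c2 \Po ('X - 1) != 0 by rewrite -size_poly_eq0 size_shift size_poly_eq0.
  have key : (c1 * (c2 \Po ('X - 1)))%:P * (D * D) = S1 * sig S2.
    apply: (mulIf (x := Q * sig Q)); first by rewrite mulf_neq0.
    transitivity ((c1%:P * (sig Q * D)) * ((c2 \Po ('X - 1))%:P * (Q * D))).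
      by rewrite polyCM; ring.
    by rewrite eq1 eq2'; ring.
  have := congr1 (fun P => P.[aa]) key; rewrite /= !hornerM hornerC /D hornerXsubC subrr !mulr0.
  move/esym/eqP; rewrite mulf_eq0 => /orP [/eqP r1|/eqP r2].
  - have /factor_theorem [S1' eS1] : root S1 aa by apply/rootP.
    have e : c1%:P * sig Q = S1' * Q.
      by apply: (mulIf D0); rewrite -mulrA eq1 eS1 mulrAC.
    by apply: (Iann_sat tf c10); rewrite e; apply: Iann_mull.
  - have /factor_theorem [S2' eS2] : root (sig S2) aa by apply/rootP.
    have e : (c2 \Po ('X - 1))%:P * Q = S2' * sig Q.
      by apply: (mulIf D0); rewrite -mulrA eq2' eS2 mulrAC.
    have S2'0 : S2' != 0.
      by apply/negP => /eqP S0; move: e; rewrite S0 mul0r => /eqP; rewrite mulf_eq0 polyC_eq0 (negPf c2'0) (negPf Q0).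
    have : size ((c2 \Po ('X - 1))%:P * Q) = size (S2' * sig Q) by rewrite e.
    rewrite size_Cmul // size_mul // size_sig.
    have : (0 < size Q)%N by rewrite size_poly_gt0.
    move=> hQ hs; have hS : (0 < size S2')%N by rewrite size_poly_gt0.
    have /size_poly1P [s s0 eS] : size S2' == 1%N.
      move: hS hs; case: (size S2') => [//|n] _; rewrite addSn /= => /eqP.
      by rewrite -{1}[size Q]add0n eqn_add2r => /eqP <-.
    apply: (Iann_sat tf s0); rewrite -eS -e; exact: Iann_mull.
pose l := lead_coef Q.
have l0 : l != 0 by rewrite lead_coef_eq0.
pose Dl := Q - sig Q.
have IDl : Iann Dl by apply: Iann_B.
have cDl : forall i, Dl`_i = Q`_i - (Q`_i \Po ('X - 1)).
  by move=> i; rewrite coefB /sig coef_map.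
have d0 : (0 < d)%N by rewrite -sQ size_poly_gt0.
have ld : Q`_d.-1 = l by rewrite /l lead_coefE sQ.
have sDl : (size Dl <= d)%N.
  apply/leq_sizeP => j hj; rewrite cDl nth_default ?sQ // comp_poly0 subrr //.
have hl : (size l <= 1)%N.
  rewrite leqNgt; apply/negP => hl.
  have nf : l - (l \Po ('X - 1)) != 0.
    apply/negP; rewrite subr_eq0 => /eqP h.
    by move: (shift_fixed (esym h)); rewrite leqNgt hl.
  have sDd : size Dl = d.
    apply/eqP; rewrite eqn_leq sDl /=; rewrite -(prednK d0) ltnNge; apply/negP => hs.
    by move: nf; rewrite -ld -cDl nth_default ?eqxx.
  have lDl : lead_coef Dl = l - (l \Po ('X - 1)) by rewrite lead_coefE sDd cDl ld.
  have Dl0 : Dl != 0 by rewrite -lead_coef_eq0 lDl.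
  have := mink _ (ex_intro _ Dl (conj Dl0 (conj IDl (conj sDd erefl)))).
  rewrite lDl -lQ -/l; move: (size_diff_shift l0); rewrite ltnNge => /negP; exact.
have lc : l \Po ('X - 1) = l by rewrite (size1_polyC hl) comp_polyC.
have Dl0 : Dl = 0.
  apply: (Isz Dl IDl); rewrite -(prednK d0) ltnS; apply/leq_sizeP => j hj.
  case: (ltngtP j d) => [jd|jd|->]; last by rewrite nth_default ?sDl.
  - have -> : j = d.-1 by apply/eqP; rewrite eqn_leq hj andbT -ltnS prednK.
    by rewrite cDl ld lc subrr.
  - by rewrite nth_default // (leq_trans sDl) // ltnW.
have sQQ : sig Q = Q by apply/eqP; rewrite eq_sym -subr_eq0 -/Dl Dl0.
have cQ : forall i, Q`_i = ((Q`_i)`_0)%:P.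
  move=> i; apply: size1_polyC; apply: shift_fixed.
  by rewrite -[in RHS]sQQ /sig coef_map.
exists (\poly_(i < size Q) (Q`_i)`_0); split.
  apply/negP => /eqP P0; move: l0; rewrite -ld.
  have := congr1 (fun p : {poly C} => p`_d.-1) P0; rewrite /= coef_poly coef0 sQ ltn_predL d0 => h.
  by rewrite cQ h eqxx.
move=> v; rewrite -(IQ v) /peval /ev /gev.
rewrite -(@sum_pad _ (fun i => (\poly_(i < size Q) (Q`_i)`_0)`_i *: iter i cas v) _ (size Q)).
- apply: eq_bigr => i _; rewrite coef_poly ltn_ord [in RHS]cQ zactC //.
- exact: size_poly.
- by move=> i hi; rewrite nth_default // scale0r.
Qed.

Definition csc := fun (c : C) (w : V) => c *: w.
Lemma peval_gev p v : peval p cas v = gev csc cas p v.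
Proof. by []. Qed.

Ltac solve_c := rewrite /csc; move=> *;
  first [exact: scalerDl | exact: scalerDr | exact: (esym (scalerA _ _ _)) | exact: scale1r | exact: casD | exact: casZ].

Lemma pevalD p q v : peval (p + q) cas v = peval p cas v + peval q cas v.
Proof. rewrite !peval_gev; apply: gev_add; solve_c. Qed.
Lemma pevalM p q v : peval (p * q) cas v = peval p cas (peval q cas v).
Proof. rewrite !peval_gev; apply: gev_mul; solve_c. Qed.
Lemma pevalC c v : peval c%:P cas v = c *: v.
Proof. rewrite !peval_gev; apply: gev_C; solve_c. Qed.
Lemma peval0r p : peval p cas 0 = 0.
Proof. rewrite !peval_gev; apply: gev_0r; solve_c. Qed.
Lemma pevalZ c p v : peval (c *: p) cas v = c *: peval p cas v.
Proof. by rewrite -mul_polyC pevalM pevalC. Qed.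

Lemma minpoly_exists P : P != 0 -> annihilates_casimir rho P ->
  exists p, is_minpoly (annihilates_casimir rho) p.
Proof.
move=> P0 AP.
have [n [[p1 [p10 [Ap1 sp1]]] minn]] :=
  ex_minP (P := fun n => exists p, p != 0 /\ annihilates_casimir rho p /\ size p = n)
    (ex_intro _ _ (ex_intro _ P (conj P0 (conj AP erefl)))).
have lc0 : lead_coef p1 != 0 by rewrite lead_coef_eq0.
exists ((lead_coef p1)^-1 *: p1); split; [|split].
- by rewrite monicE lead_coefZ mulVf.
- by move=> v; rewrite pevalZ Ap1 scaler0.
- move=> q Aq; apply/modp_eq0P.
  set p0 := _ *: p1.
  have Ap0 : annihilates_casimir rho p0 by move=> v; rewrite pevalZ Ap1 scaler0.
  have p00 : p0 != 0 by rewrite scaler_eq0 negb_or invr_eq0 lc0.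
  have Ar : annihilates_casimir rho (q %% p0).
    move=> v; have := Aq v; rewrite {1}(divp_eq q p0) pevalD pevalM Ap0 peval0r add0r //.
  apply/eqP; apply/negPn/negP => r0.
  have := minn _ (ex_intro _ _ (conj r0 (conj Ar erefl))).
  by rewrite -sp1 leqNgt -(size_scale p1 (invr_neq0 lc0)) ltn_modp p00.
Qed.

Definition rep (y : Defs.frac V) (u : V) (q : {poly C}) := y.2 != 0 /\ zact q y.1 = zact y.2 u.

Lemma zact_comm a b w : zact a (zact b w) = zact b (zact a w).
Proof. by rewrite -!zactM mulrC. Qed.

Lemma L0_zact p w : L0 (zact p w) = zact p (L0 w).
Proof. by rewrite -zactX -zactM -zactMX mulrC. Qed.

Lemma rep_add y1 y2 u1 u2 q : rep y1 u1 q -> rep y2 u2 q ->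
  rep (frac_add rho y1 y2) (u1 + u2) q.
Proof.
case=> [n1 e1] [n2 e2]; split; first by rewrite /= mulf_neq0.
rewrite /= zactDr !(zact_comm q) e1 e2 zactDr !zactM.
by rewrite (zact_comm y2.2).
Qed.

Lemma rep0 q : rep (frac0 V) 0 q.
Proof. by split; rewrite /= ?oner_eq0 // zact0r zact0r. Qed.

Lemma rep_scale c y u q : rep y u q -> rep (frac_scale c y) (c *: u) q.
Proof. by case=> n e; split => //=; rewrite !zactZr e. Qed.

Lemma rep_opp y u q : rep y u q -> rep (frac_opp y) (- u) q.
Proof. by case=> n e; split => //=; rewrite !zactNr e. Qed.

Lemma rep_L0 y u q : rep y u q -> rep (ratL0 rho y) (L0 u) q.
Proof. by case=> n e; split => //=; rewrite -!L0_zact e. Qed.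

Lemma size_Xp1 : size ('X + 1 : {poly C}) = 2.
Proof. by rewrite -polyC1 size_XaddC. Qed.

Lemma rep_L1 y u q : rep y u q -> rep (ratL1 rho y) (L1 u) (q \Po ('X + 1)).
Proof.
case=> n e; split => /=.
  by rewrite -size_poly_eq0 size_comp_poly2 ?size_Xp1 // size_poly_eq0.
by rewrite -!L1_zact e.
Qed.

Lemma rep_Lm1 y u q : rep y u q -> rep (ratLm1 rho y) (Lm1 u) (q \Po ('X - 1)).
Proof.
case=> n e; split => /=.
  by rewrite -size_poly_eq0 size_shift size_poly_eq0.
by rewrite -!Lm1_zact e.
Qed.

Lemma rep_cas y u q : rep y u q -> rep (rat_casimir rho y) (cas u) q.
Proof.
move=> r; rewrite /rat_casimir /casimir.
apply: rep_add; first by apply: rep_add; [apply: rep_L0; apply: rep_L0 | apply: rep_opp; apply: rep_L0].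
apply: rep_opp; rewrite -[q]comp_tau_sig; apply: rep_Lm1; exact: rep_L1.
Qed.

Lemma rep_iter k y u q : rep y u q -> rep (iter k (rat_casimir rho) y) (iter k cas u) q.
Proof. by move=> r; elim: k => //= k IH; apply: rep_cas. Qed.

Lemma rep_peval p y u q : rep y u q ->
  rep (frac_peval rho p (rat_casimir rho) y) (peval p cas u) q.
Proof.
move=> r; rewrite /frac_peval /peval.
elim/big_rec2: _ => [|i y1 y2 _ IH]; first exact: rep0.
by apply: rep_add => //; apply: rep_scale; apply: rep_iter.
Qed.



Lemma frac_eq0 z : frac_eq rho z (frac0 V) <-> z.1 = 0.
Proof.
split.
  case=> s [s0]; rewrite /= zact0r subr0 zact1 => h; exact: (tf s0 h).
by move=> h; exists 1; split; rewrite ?oner_eq0 //= h !zact0r subrr zact0r.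
Qed.

Lemma rat_equiv p : annihilates_rat_casimir rho p <-> annihilates_casimir rho p.
Proof.
split.
  move=> Ar v.
  have r1 : rep (v, 1) v 1 by split; rewrite ?oner_eq0.
  have [n e] := rep_peval p r1.
  have /frac_eq0 h := Ar (v, 1) (oner_neq0 _).
  by apply: (tf n); rewrite -e h zact0r.
move=> A x xo; apply/frac_eq0.
have r1 : rep x x.1 x.2 by split.
have [n e] := rep_peval p r1.
by apply: (tf xo); rewrite e A zact0r.
Qed.
End Main.
End Sl2.

Section FracSplit.
Local Open Scope quotient_scope.
Lemma frac_split (A : idomainType) (x : {fraction A}) :
  exists ab : A * A, ab.2 != 0 /\ x * (tofrac ab.2) = tofrac ab.1.
Proof.
elim/quotW: x => r. exists ((frac r).1, (frac r).2). split; first exact: denom_ratioP.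
unlock tofrac. rewrite !piE. apply/eqmodP. rewrite /= FracField.equivfE /FracField.mulf.
have h := denom_ratioP r.
rewrite !numden_Ratio ?mulf_neq0 ?oner_neq0 //.
by rewrite !mulr1 mulrC.
Qed.
End FracSplit.

Section FR.
Variables (R : realType) (V : lmodType R[i]) (rho : sl2mod V).
Hypothesis tf : torsion_free rho.
Local Notation C := R[i].
Local Notation cas := (casimir rho).
Local Notation zact := (zact rho).

Lemma big_frac n (F : 'I_n -> Defs.frac V) : (forall i, (F i).2 != 0) ->
  exists c : nat -> {poly C}, (\big[frac_add rho/frac0 V]_(i < n) F i).2 != 0 /\
     (\big[frac_add rho/frac0 V]_(i < n) F i).1 = \sum_(i < n) zact (c i) (F i).1.
Proof.
elim: n F => [|n IH] F Fok.
  by exists (fun _ => 0); rewrite !big_ord0 /= oner_eq0.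
have [c [c0 ce]] := IH (fun i => F (lift ord0 i)) (fun i => Fok _).
set B := \big[_/_]_(i < n) _ in c0 ce.
exists (fun i => if i == 0%N then B.2 else (F ord0).2 * c i.-1).
rewrite !big_ord_recl /= -/B; split; first by apply: mulf_neq0.
rewrite ce zact_sumr; congr (_ + _).
by apply: eq_bigr => i _; rewrite zactM.
Qed.

Lemma span (FR : finite_rank rho) : exists n (w : 'I_n -> V), forall u,
  exists D (c : 'I_n -> {poly C}), D != 0 /\ zact D u = \sum_(i < n) zact (c i) (w i).
Proof.
case: FR => n [xs [xok H]]; exists n, (fun i => (xs i).1) => u.
have [a [b [b0 fe]]] := H (u, 1) (oner_neq0 _).
have [c [c0 ce]] := big_frac (F := fun i => frac_rscale rho (a i) (b i) (xs i))
  (fun i => mulf_neq0 (b0 i) (xok i)).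
set B := \big[_/_]_(i < n) _ in c0 ce fe.
exists B.2, (fun i : 'I_n => c i * a i); split => //.
case: fe => s [s0]; rewrite /= zact1 => /(tf s0) /eqP; rewrite subr_eq0 => /eqP ->.
by rewrite ce; apply: eq_bigr => i _; rewrite zactM.
Qed.

Lemma dependence n (w : 'I_n -> V)
  (Hw : forall u, exists D (c : 'I_n -> {poly C}), D != 0 /\ zact D u = \sum_(i < n) zact (c i) (w i))
  (u : 'I_n.+1 -> V) :
  exists y : 'I_n.+1 -> {poly C}, (exists j, y j != 0) /\ \sum_(j < n.+1) zact (y j) (u j) = 0.
Proof.
have H1 : forall j : 'I_n.+1, exists Dc : {poly C} * ('I_n -> {poly C}),
    Dc.1 != 0 /\ zact Dc.1 (u j) = \sum_(i < n) zact (Dc.2 i) (w i).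
  move=> j; have [D [c [D0 e]]] := Hw (u j); by exists (D, c).
have [f fP] := fin_all_exists H1.
pose M : 'M[{fraction {poly C}}]_(n.+1, n) := \matrix_(j, i) tofrac ((f j).2 i).
have kM : kermx M != 0.
  rewrite -mxrank_eq0 mxrank_ker -lt0n subn_gt0.
  exact: (leq_ltn_trans (rank_leq_col M)).
have [r rr] : exists r, row r (kermx M) != 0.
  apply: Classical_Prop.NNPP => nr; move/negP: kM; apply; apply/eqP/row_matrixP => r.
  rewrite row0; apply/eqP; apply/negPn/negP => h; apply: nr; by exists r.
pose yv := row r (kermx M).
have yM : yv *m M = 0 by rewrite /yv -row_mul mulmx_ker row0.
have H2 : forall j : 'I_n.+1, exists ab : {poly C} * {poly C},
    ab.2 != 0 /\ yv 0 j * tofrac ab.2 = tofrac ab.1.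
  by move=> j; apply: frac_split.
have [g gP] := fin_all_exists H2.
pose B := \prod_(j < n.+1) (g j).2.
have B0 : B != 0 by apply/prodf_neq0 => j _; case: (gP j).
pose y' j := (g j).1 * \prod_(k < n.+1 | k != j) (g k).2.
have ty' : forall j, tofrac (y' j) = yv 0 j * tofrac B.
  move=> j; rewrite /y' /B [in RHS](bigD1 j) //= !rmorphM mulrA; case: (gP j) => _ ->.
  by [].
clearbody y'.
have rel : forall i, \sum_(j < n.+1) y' j * (f j).2 i = 0.
  move=> i; apply/eqP; rewrite -tofrac_eq0 rmorph_sum /=.
  under eq_bigr => j _ do rewrite rmorphM /= ty' mulrAC.
  rewrite -mulr_suml mulf_eq0; apply/orP; left.
  have := congr1 (fun A : 'M[{fraction {poly C}}]_(1, n) => A 0 i) yM; rewrite !mxE => h.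
  by apply/eqP; rewrite -[RHS]h; apply: eq_bigr => j _; rewrite /M !mxE.
exists (fun j => y' j * (f j).1); split.
  have [j yj] : exists j, yv 0 j != 0.
    have z : forall j, (0 : 'rV[{fraction {poly C}}]_(n.+1)) 0 j = 0 by move=> j; rewrite mxE.
    apply: Classical_Prop.NNPP => nj; apply: (negP rr); apply/eqP/rowP => j; rewrite z.
    by apply/eqP; apply/negPn/negP => h; apply: nj; exists j.
  exists j.
  have y'0 : y' j != 0.
    apply/negP => /eqP h; move: (ty' j); rewrite h rmorph0 => e0.
    have : yv 0 j * tofrac B != 0.
      apply: mulf_neq0; first exact: yj.
      by rewrite tofrac_eq0.
    by rewrite -e0 eqxx.
  have f0 : (f j).1 != 0 by case: (fP j).
  exact: (mulf_neq0 y'0 f0).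
have -> : \sum_(j < n.+1) zact (y' j * (f j).1) (u j) =
    \sum_(j < n.+1) \sum_(i < n) zact (y' j * (f j).2 i) (w i).
  apply: eq_bigr => j _; rewrite zactM (proj2 (fP j)) zact_sumr.
  by apply: eq_bigr => i _; rewrite zactM.
rewrite exchange_big /=; apply: big1 => i _.
by rewrite -zact_suml rel zact0.
Qed.

Lemma exists_I (FR : finite_rank rho) : exists Q, Q != 0 /\ Iann rho Q.
Proof.
have [n [w Hw]] := span FR.
have loc : forall v, exists Q, Q != 0 /\ ev rho Q v = 0.
  move=> v; have [y [[j yj] ys]] := dependence Hw (fun j => iter j cas v).
  exists (\poly_(k < n.+1) y (inord k)); split.
    apply/negP => /eqP P0; move: yj.
    have := congr1 (fun p : {poly {poly C}} => p`_j) P0.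
    rewrite /= coef_poly coef0 ltn_ord inord_val => ->; by rewrite eqxx.
  rewrite /ev /gev -[RHS]ys.
  rewrite -(@sum_pad _ (fun k => zact (\poly_(k < n.+1) y (inord k))`_k (iter k cas v)) _ n.+1).
  - by apply: eq_bigr => k _; rewrite coef_poly ltn_ord inord_val.
  - exact: size_poly.
  - by move=> k hk; rewrite nth_default ?zact0.
have H3 : forall i : 'I_n, exists Q, Q != 0 /\ ev rho Q (w i) = 0 by move=> i; exact: loc.
have [Qf QfP] := fin_all_exists H3.
exists (\prod_(i < n) Qf i); split.
  by apply/prodf_neq0 => i _; case: (QfP i).
have Qw : forall i, ev rho (\prod_(i < n) Qf i) (w i) = 0.
  by move=> i; rewrite (bigD1 i) //= mulrC evM (proj2 (QfP i)) ev0r.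
move=> u; have [D [c [D0 e]]] := Hw u.
apply: (tf D0); rewrite -ev_zact e ev_sumr big1 // => i _.
by rewrite ev_zact Qw zact0r.
Qed.
End FR.

Theorem theorem7p1 (R : realType) (V : lmodType R[i]) (rho : sl2mod V) :
  torsion_free rho -> finite_rank rho ->
  exists p : {poly R[i]},
    is_minpoly (annihilates_casimir rho) p /\
    is_minpoly (annihilates_rat_casimir rho) p.
Proof.
move=> tf FR.
have [P [P0 AP]] := ann_from_I tf (exists_I tf FR).
have [p [mon [Ap div]]] := minpoly_exists P0 AP.
exists p; split; first exact: (conj mon (conj Ap div)).
split; first exact: mon.
split; first by apply/(rat_equiv tf).
by move=> q /(rat_equiv tf) /div.
Qed.
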